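(* Let $k$ be a perfect field, let $G$ be a reductive algebraic group over $k$ (not necessarily connected), and let $V$ be a finite-dimensional rational $G$-module, with everything defined over $k$. Let $\gamma\in V(k)$, let $\lambda\in\Lambda(\gamma,k)_{\min}$ and let $p\in P(\lambda)(k)$. Then $\lambda\in\Lambda(p\cdot\gamma,k)_{\min}$, and the limit points $\lim_{t\to0}\lambda(t)\cdot\gamma$ and $\lim_{t\to0}\lambda(t)\cdot(p\cdot\gamma)$ lie in the same $G(k)$-orbit.
   Context: $X_*(G)_k$ is the set of cocharacters $\mathrm{GL}(1)\to G$ defined over $k$. For $\lambda\in X_*(G)$ and $v\in V$, the limit $\lim_{t\to0}\lambda(t)\cdot v$ exists and equals $x$ if there is a morphism $\ell\colon\mathbb A^1\to V$ with $\ell(t)=\lambda(t)\cdot v$ for $t\ne0$ and $\ell(0)=x$. A vector is semisimple if its $G$-orbit is Zariski closed. For $\lambda\in X_*(G)$, $V_{\lambda,0}=\{v\in V:\lambda(t)\cdot v=v\text{ for all }t\}$, and $P(\lambda)=\{g\in G:\lim_{t\to0}\lambda(t)g\lambda(t)^{-1}\text{ exists}\}$ (limit for the conjugation action of $G$ on itself); it is an algebraic group defined over $k$ when $\lambda$ is. $\Lambda(\gamma,k)_{\min}$ is the set of those $\lambda\in X_*(G)_k$ which minimize $\dim V_{\lambda,0}$ among all $\lambda\in X_*(G)_k$ for which $\lim_{t\to0}\lambda(t)\cdot\gamma$ exists and is semisimple. *)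

(* Defs.v *)
(* linear algebraic groups modelled concretely as Zariski-closed
   subgroups of GL_n(K), K an algebraic closure of the perfect field k. *)
From HB Require Import structures.
From mathcomp Require Import all_boot all_order all_algebra.
From mathcomp Require Import mpoly.
Set Implicit Arguments. Unset Strict Implicit. Unset Printing Implicit Defensive.
Import Order.TTheory GRing.Theory Num.Theory.
Local Open Scope ring_scope.

Section AlgGroups.
Variable K : closedFieldType.

Definition is_subfield (k : {pred K}) : Prop :=
  [/\ 1 \in k, {in k &, forall x y, x - y \in k},
      {in k &, forall x y, x * y \in k} & {in k, forall x, x^-1 \in k}].

Definition algebraic_over (k : {pred K}) : Prop :=
  forall x : K, exists2 q : {poly K}, (q != 0) && (q \is a polyOver k) & root q x.

Definition perfect (k : {pred K}) : Prop :=
  forall p : nat, p \in [pchar K] -> {in k, forall x, exists2 y, y \in k & y ^+ p = x}.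

(** entries in k, i.e. k-rational points *)
Definition mx_over (k : {pred K}) m n (A : 'M[K]_(m, n)) : Prop :=
  forall i j, A i j \in k.

Variable n : nat.

Definition mcoords (A : 'M[K]_n) : 'I_(n * n) -> K := fun i => mxvec A 0 i.

(** coordinates (entries, det^-1) of an element of GL_n : coordinate ring of GL_n *)
Definition glcoords (A : 'M[K]_n) : 'I_(n * n).+1 -> K :=
  fun i => if unlift ord_max i is Some j then mxvec A 0 j else (\det A)^-1.

Definition gl_closed (Z : 'M[K]_n -> Prop) : Prop :=
  exists F : {mpoly K[n * n]} -> Prop,
    forall A, Z A <-> (A \in unitmx /\ forall f, F f -> f.@[mcoords A] = 0).

Definition gl_closed_over (k : {pred K}) (Z : 'M[K]_n -> Prop) : Prop :=
  exists F : {mpoly K[n * n]} -> Prop,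
    (forall f, F f -> f \is a mpolyOver _ k) /\
    forall A, Z A <-> (A \in unitmx /\ forall f, F f -> f.@[mcoords A] = 0).

Definition is_subgroup (H : 'M[K]_n -> Prop) : Prop :=
  [/\ H 1%:M, forall A B, H A -> H B -> H (A *m B) & forall A, H A -> H (invmx A)].

Definition alg_group_over (k : {pred K}) (G : 'M[K]_n -> Prop) : Prop :=
  is_subgroup G /\ gl_closed_over k G.

Definition zconnected (U : 'M[K]_n -> Prop) : Prop :=
  forall Z1 Z2, gl_closed Z1 -> gl_closed Z2 ->
    (forall A, U A -> Z1 A \/ Z2 A) ->
    (forall A, U A -> Z1 A -> Z2 A -> False) ->
    (forall A, U A -> Z1 A) \/ (forall A, U A -> Z2 A).

Definition unipotent (A : 'M[K]_n) : Prop := (A - 1%:M) ^+ n = 0.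

(** reductive (not necessarily connected): the unipotent radical of G° is trivial,
    i.e. every closed connected normal unipotent subgroup of G is trivial *)
Definition reductive (G : 'M[K]_n -> Prop) : Prop :=
  forall U : 'M[K]_n -> Prop,
    is_subgroup U -> gl_closed U -> zconnected U -> (forall A, U A -> G A) ->
    (forall g u, G g -> U u -> U (g *m u *m invmx g)) ->
    (forall u, U u -> unipotent u) ->
    forall u, U u -> u = 1%:M.

Variable m : nat.

Definition rational_rep_over (k : {pred K}) (G : 'M[K]_n -> Prop)
    (rho : 'M[K]_n -> 'M[K]_m) : Prop :=
  [/\ rho 1%:M = 1%:M,
      forall A B, G A -> G B -> rho (A *m B) = rho A *m rho B &
      exists P : 'M[{mpoly K[(n * n).+1]}]_m,
        (forall i j, P i j \is a mpolyOver _ k) /\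
        forall A, G A -> rho A = \matrix_(i, j) (P i j).@[glcoords A]].

(** cocharacters GL_1 -> G defined over k; values at t = 0 are irrelevant *)
Definition cochar_over (k : {pred K}) (G : 'M[K]_n -> Prop) (lam : K -> 'M[K]_n) : Prop :=
  [/\ forall t, t != 0 -> G (lam t),
      forall s t, s != 0 -> t != 0 -> lam (s * t) = lam s *m lam t &
      exists (d : nat) (Q : 'M[{poly K}]_n),
        (forall i j, Q i j \is a polyOver k) /\
        forall t, t != 0 -> lam t = t ^- d *: \matrix_(i, j) (Q i j).[t]].

(** lim_{t->0} f t = x : f extends to a morphism A^1 -> K^m with value x at 0 *)
Definition vlim (f : K -> 'cV[K]_m) (x : 'cV[K]_m) : Prop :=
  exists L : 'cV[{poly K}]_m,
    (forall t, t != 0 -> f t = \matrix_(i, j) (L i j).[t]) /\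
    x = \matrix_(i, j) (L i j).[0].

Definition vcoords (v : 'cV[K]_m) : 'I_m -> K := fun i => v i 0.

Definition v_closed (S : 'cV[K]_m -> Prop) : Prop :=
  exists F : {mpoly K[m]} -> Prop,
    forall v, S v <-> (forall f, F f -> f.@[vcoords v] = 0).

(** semisimple: the G-orbit (over the algebraic closure) is Zariski closed *)
Definition semisimple (G : 'M[K]_n -> Prop) (rho : 'M[K]_n -> 'M[K]_m) (v : 'cV[K]_m) : Prop :=
  v_closed (fun w => exists2 g, G g & w = rho g *m v).

Definition fixspace_dim (rho : 'M[K]_n -> 'M[K]_m) (lam : K -> 'M[K]_n) (d : nat) : Prop :=
  exists W : 'M[K]_m,
    (forall v : 'rV[K]_m,
        (v <= W)%MS <-> (forall t, t != 0 -> rho (lam t) *m v^T = v^T)) /\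
    \rank W = d.

Definition Lambda_cand (k : {pred K}) (G : 'M[K]_n -> Prop) (rho : 'M[K]_n -> 'M[K]_m)
    (v : 'cV[K]_m) (lam : K -> 'M[K]_n) : Prop :=
  cochar_over k G lam /\
  exists2 x, vlim (fun t => rho (lam t) *m v) x & semisimple G rho x.

Definition Lambda_min (k : {pred K}) (G : 'M[K]_n -> Prop) (rho : 'M[K]_n -> 'M[K]_m)
    (v : 'cV[K]_m) (lam : K -> 'M[K]_n) : Prop :=
  Lambda_cand k G rho v lam /\
  forall mu d d', Lambda_cand k G rho v mu ->
    fixspace_dim rho lam d -> fixspace_dim rho mu d' -> (d <= d')%N.

Definition Pgroup (G : 'M[K]_n -> Prop) (lam : K -> 'M[K]_n) (g : 'M[K]_n) : Prop :=
  G g /\ exists L : 'M[{poly K}]_n,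
    (forall t, t != 0 -> lam t *m g *m invmx (lam t) = \matrix_(i, j) (L i j).[t]) /\
    G (\matrix_(i, j) (L i j).[0]).

End AlgGroups.

(* Main.v *)
Require Import Defs.
From HB Require Import structures.
From mathcomp Require Import all_boot all_order all_algebra.
From mathcomp Require Import mpoly.
Import Order.TTheory GRing.Theory Num.Theory.
Local Open Scope ring_scope.
Set Implicit Arguments. Unset Strict Implicit. Unset Printing Implicit Defensive.


Section Gen.
Variable K : closedFieldType.

Lemma poly_eq_nz (p q : {poly K}) :
  (forall t, t != 0 -> p.[t] = q.[t]) -> p = q.
Proof.
move=> H; apply/eqP; rewrite -subr_eq0; apply/negPn/negP => r0.
set r := p - q in r0.
have fr : forall x, ('X * r).[x] = 0.
  move=> x; rewrite hornerM hornerX.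
  have [->|x0] := eqVneq x 0; first by rewrite mul0r.
  by rewrite /r hornerD hornerN H // subrr mulr0.
have szf : size ('X * r) = (size r).+1 by rewrite mulrC size_mulX.
have rs : (0 < size r)%N by rewrite lt0n size_poly_eq0.
have sz : size ('X * r + 1) != 1%N.
  by rewrite size_addl szf ?size_poly1 ?ltnS //= eqSS -lt0n.
case/closed_rootP: sz => x /rootP; rewrite hornerD fr hornerC add0r => /eqP; by rewrite oner_eq0.
Qed.

Definition ev a b (L : 'M[{poly K}]_(a, b)) (t : K) : 'M[K]_(a, b) :=
  \matrix_(i, j) (L i j).[t].

Lemma evE a b (L : 'M[{poly K}]_(a, b)) t : ev L t = map_mx (horner_eval t) L.
Proof. by apply/matrixP => i j; rewrite !mxE. Qed.

Lemma evM a b c (L1 : 'M[{poly K}]_(a, b)) (L2 : 'M[{poly K}]_(b, c)) t :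
  ev (L1 *m L2) t = ev L1 t *m ev L2 t.
Proof. by rewrite !evE map_mxM. Qed.

Lemma evC a b (A : 'M[K]_(a, b)) t : ev (map_mx polyC A) t = A.
Proof. by apply/matrixP => i j; rewrite !mxE hornerC. Qed.

Lemma ev_inj a b (L1 L2 : 'M[{poly K}]_(a, b)) :
  (forall t, t != 0 -> ev L1 t = ev L2 t) -> L1 = L2.
Proof.
move=> H; apply/matrixP => i j; apply: poly_eq_nz => t t0.
by have := congr1 (fun M : 'M[K]_(a, b) => M i j) (H t t0); rewrite !mxE.
Qed.

Definition mcomp N (f : {mpoly K[N]}) (q : 'I_N -> {poly K}) : {poly K} :=
  \sum_(m <- msupp f) (f@_m)%:P * \prod_i (q i) ^+ (m i).

Lemma mcompE N (f : {mpoly K[N]}) q t :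
  (mcomp f q).[t] = f.@[fun i => (q i).[t]].
Proof.
rewrite /mcomp mevalE -horner_evalE rmorph_sum; apply: eq_bigr => mm _.
rewrite rmorphM rmorph_prod /= horner_evalE hornerC; congr (_ * _).
by apply: eq_bigr => i _; rewrite rmorphXn.
Qed.

End Gen.


Lemma det_over (R : comNzRingType) (S : subringClosed R) n (A : 'M[R]_n) :
  A \is a mxOver S -> \det A \in S.
Proof.
move/mxOverP => HA; rewrite /determinant rpred_sum // => s _.
by rewrite rpredM ?rpredX ?rpredN ?rpred1 // rpred_prod.
Qed.

Lemma adj_over (R : comNzRingType) (S : subringClosed R) n (A : 'M[R]_n) :
  A \is a mxOver S -> \adj A \is a mxOver S.
Proof.
move/mxOverP => HA; apply/mxOverP => i j; rewrite mxE /cofactor.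
rewrite rpredM ?rpredX ?rpredN ?rpred1 // det_over //.
by apply/mxOverP => a b; rewrite !mxE.
Qed.

Section Sub.
Variable K : closedFieldType.
Variable k : {pred K}.
Hypothesis hk : is_subfield k.

Lemma kdiv : GRing.divring_closed k.
Proof.
case: hk => h1 hB hM hV; split => //.
by move=> x y xk yk; apply: hM => //; apply: hV.
Qed.
HB.instance Definition _ := GRing.isDivringClosed.Build K k kdiv.

Lemma low_coef (D L M : {poly K}) : D \is a polyOver k -> M \is a polyOver k ->
  D != 0 -> D * L = M -> L`_0 \in k.
Proof.
move=> /polyOverP Dk /polyOverP Mk D0 DLM.
have ex : exists i, D`_i != 0.
  by exists (size D).-1; rewrite -lead_coefE lead_coef_eq0.
case: (ex_minnP ex) => e De Hmin.
have ME : M`_e = D`_e * L`_0.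
  rewrite -DLM coefM big_ord_recr /= subnn big1 ?add0r // => -[j /= je] _.
  have -> : D`_j = 0; last by rewrite mul0r.
  by apply/eqP; apply: contraTT je => /Hmin; rewrite leqNgt.
have -> : L`_0 = (D`_e)^-1 * M`_e by rewrite ME mulKf.
by rewrite rpredM ?rpredV.
Qed.

End Sub.


Section Main.
Variable K : closedFieldType.
Variable k : {pred K}.
Hypothesis hk : is_subfield k.
HB.instance Definition _ := GRing.isDivringClosed.Build K k (kdiv hk).

Variables n m : nat.
Variable G : 'M[K]_n -> Prop.
Hypothesis hG : alg_group_over k G.
Variable rho : 'M[K]_n -> 'M[K]_m.
Hypothesis hrho : rational_rep_over k G rho.

Lemma Gunit A : G A -> A \in unitmx.
Proof. by case: hG => _ [F [_ HF]] /HF []. Qed.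
Lemma G1 : G 1%:M. Proof. by case: hG => -[] H1 HM HV _; auto. Qed.
Lemma GM A B : G A -> G B -> G (A *m B). Proof. by case: hG => -[] H1 HM HV _; auto. Qed.
Lemma GV A : G A -> G (invmx A). Proof. by case: hG => -[] H1 HM HV _; auto. Qed.
Lemma rho1 : rho 1%:M = 1%:M. Proof. by case: hrho. Qed.
Lemma rhoM A B : G A -> G B -> rho (A *m B) = rho A *m rho B.
Proof. by case: hrho => _ H _; apply: H. Qed.

Lemma rhoVl g : G g -> rho (invmx g) *m rho g = 1%:M.
Proof. move=> Gg; have GVg := GV Gg; rewrite -rhoM // (mulVmx (Gunit Gg)); exact: rho1. Qed.
Lemma rhoVr g : G g -> rho g *m rho (invmx g) = 1%:M.
Proof. move=> Gg; have GVg := GV Gg; rewrite -rhoM // (mulmxV (Gunit Gg)); exact: rho1. Qed.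

Lemma ss_transfer g x : G g -> semisimple G rho x -> semisimple G rho (rho g *m x).
Proof.
move=> Gg [F HF]; exists F => v; rewrite -HF; split.
- case=> h Gh ->; exists (h *m g); first exact: GM.
  by rewrite rhoM ?mulmxA.
- case=> h Gh ->; exists (h *m invmx g); first by apply: GM => //; apply: GV.
  have GVg := GV Gg.
  by rewrite mulmxA rhoM // -(mulmxA (rho h)) rhoVl // mulmx1.
Qed.

Lemma evM' a b c (L1 : 'M[{poly K}]_(a, b)) (L2 : 'M[{poly K}]_(b, c)) t :
  \matrix_(i, j) ((L1 *m L2) i j).[t] = ev L1 t *m \matrix_(i, j) (L2 i j).[t].
Proof. exact: evM. Qed.

Lemma vlim_mul (f f' : K -> 'cV[K]_m) x R :
  vlim f x -> (forall t, t != 0 -> f' t = ev R t *m f t) -> vlim f' (ev R 0 *m x).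
Proof.
case=> L [HL ->] H; exists (R *m L); split; last by rewrite evM'.
by move=> t t0; rewrite H // HL // evM'.
Qed.

Lemma vlim_uniq (f : K -> 'cV[K]_m) x y : vlim f x -> vlim f y -> x = y.
Proof.
case=> L [HL ->] [L' [HL' ->]].
suff -> : L = L' by [].
by apply: ev_inj => t t0; rewrite /ev -HL -?HL'.
Qed.

Lemma mx_over_inv (p : 'M[K]_n) : p \in unitmx -> mx_over k p -> mx_over k (invmx p).
Proof.
move=> pu pk; have pk' : p \is a mxOver k by apply/mxOverP.
rewrite /invmx pu => i j; rewrite mxE rpredM ?rpredV ?det_over //.
by move/mxOverP: (adj_over pk'); apply.
Qed.

Lemma rho_conj (p A : 'M[K]_n) : G p -> G A ->
  rho (invmx p *m A *m p) = rho (invmx p) *m rho A *m rho p.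
Proof. by move=> Gp GA; have GVp := GV Gp; rewrite !rhoM //; apply: GM. Qed.

Lemma cochar_conj mu (p : 'M[K]_n) : G p -> mx_over k p -> cochar_over k G mu ->
  cochar_over k G (fun t => invmx p *m mu t *m p).
Proof.
move=> Gp pk [muG muM [d [Q [Qk muQ]]]]; have GVp := GV Gp; have pu := Gunit Gp.
split.
- by move=> t t0; apply: GM => //; apply: GM => //; apply: muG.
- by move=> s t s0 t0; rewrite muM // !mulmxA (mulmxK pu).
exists d, (map_mx polyC (invmx p) *m Q *m map_mx polyC p); split.
  have QO : Q \is a mxOver (polyOver k) by apply/mxOverP.
  have CO : forall A : 'M[K]_n, mx_over k A -> map_mx polyC A \is a mxOver (polyOver k).
    by move=> A Ak; apply/mxOverP => i j; rewrite mxE polyOverC.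
  have := mxOverM (mxOverM (CO _ (mx_over_inv pu pk)) QO) (CO _ pk).
  by move/mxOverP.
move=> t t0; rewrite muQ //.
have -> : \matrix_(i, j) ((map_mx polyC (invmx p) *m Q *m map_mx polyC p) i j).[t]
  = ev (map_mx polyC (invmx p) *m Q *m map_mx polyC p) t by [].
by rewrite !evM !evC -scalemxAr -scalemxAl.
Qed.

Lemma fix_conj mu (p : 'M[K]_n) d : G p -> (forall t, t != 0 -> G (mu t)) ->
  fixspace_dim rho mu d -> fixspace_dim rho (fun t => invmx p *m mu t *m p) d.
Proof.
move=> Gp muG [W [HW rW]]; have GVp := GV Gp.
have Bu : (rho p)^T \in unitmx by rewrite unitmx_tr; case: (mulmx1_unit (rhoVr Gp)).
exists (W *m invmx (rho p)^T); split; last first.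
  by rewrite mxrankMfree // row_free_unit unitmx_inv.
move=> v.
have E1 : (v <= W *m invmx (rho p)^T)%MS <-> (v *m (rho p)^T <= W)%MS.
  split.
  - by move/(submxMr (rho p)^T); rewrite (mulmxKV Bu).
  - by move/(submxMr (invmx (rho p)^T)); rewrite (mulmxK Bu).
rewrite E1 HW trmx_mul trmxK; split.
- move=> H t t0; have Gm := muG t t0; rewrite rho_conj // -!mulmxA H // mulmxA rhoVl // mul1mx //.
- move=> H t t0.
  have Gm := muG t t0.
  rewrite -[LHS]mul1mx -(rhoVr Gp) -mulmxA; congr (_ *m _).
  by rewrite !mulmxA -rho_conj // H.
Qed.

Lemma cand_conj gamma mu (p : 'M[K]_n) : G p -> mx_over k p ->
  Lambda_cand k G rho (rho p *m gamma) mu ->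
  Lambda_cand k G rho gamma (fun t => invmx p *m mu t *m p).
Proof.
move=> Gp pk [cmu [y Hy ssy]]; have GVp := GV Gp; split; first exact: cochar_conj.
exists (rho (invmx p) *m y); last exact: ss_transfer.
case: cmu => muG _ _.
have := vlim_mul (f' := fun t => rho (invmx p *m mu t *m p) *m gamma)
  (R := map_mx polyC (rho (invmx p))) Hy; rewrite evC; apply => t t0.
by rewrite evC rho_conj ?mulmxA //; apply: muG.
Qed.

Lemma key (lam : K -> 'M[K]_n) (p : 'M[K]_n) :
  cochar_over k G lam -> Pgroup G lam p -> mx_over k p ->
  exists2 p0, G p0 /\ mx_over k p0 &
   forall gamma x1, vlim (fun t => rho (lam t) *m gamma) x1 ->
     vlim (fun t => rho (lam t) *m (rho p *m gamma)) (rho p0 *m x1).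
Proof.
move=> [lamG lamM [d [Q [Qk lamQ]]]] [Gp [Lc [HLc Gp0]]] pk.
have lamU t : t != 0 -> lam t \in unitmx by move=> t0; exact: Gunit (lamG t t0).
have HLc' : forall t, t != 0 -> lam t *m p *m invmx (lam t) = ev Lc t := HLc.
have comm : forall t, t != 0 -> ev Lc t *m lam t = lam t *m p.
  by move=> t t0; rewrite -HLc' // (mulmxKV (lamU t t0)).
have detE : forall t, \det (ev Lc t) = \det p.
  have : \det Lc = (\det p)%:P.
    apply: poly_eq_nz => t t0; rewrite hornerC -horner_evalE -det_map_mx -evE -HLc' //.
    have : \det (lam t) != 0 by rewrite -unitfE -unitmxE; apply: lamU.
    by move=> dn0; rewrite !det_mulmx det_inv mulrAC mulfV ?mul1r.
  by move=> dL t; rewrite evE det_map_mx dL /= horner_evalE hornerC.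
case: hrho => _ _ [P [_ HP]].
pose q := fun i : 'I_(n * n).+1 =>
  if unlift ord_max i is Some j then mxvec Lc 0 j else ((\det p)^-1)%:P.
pose R := \matrix_(i, j) mcomp (P i j) q.
have glE : forall t, glcoords (ev Lc t) =1 (fun i => (q i).[t]).
  move=> t i; rewrite /glcoords /q; case: (unlift ord_max i) => [j|].
  - by rewrite evE -map_mxvec mxE.
  - by rewrite detE hornerC.
have rhoE : forall t, G (ev Lc t) -> rho (ev Lc t) = ev R t.
  move=> t Gt; rewrite HP //; apply/matrixP => i j; rewrite !mxE mcompE.
  exact: meval_eq (glE t).
have GLc : forall t, t != 0 -> G (ev Lc t).
  move=> t t0; rewrite -HLc' //; apply: GM; first exact: GM (lamG t t0) Gp.
  exact: GV (lamG t t0).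
exists (ev Lc 0); last first.
  move=> gamma x1 Hx1.
  have := vlim_mul (R := R) (f' := fun t => rho (lam t) *m (rho p *m gamma)) Hx1.
  rewrite -rhoE //; apply => t t0.
  have Gl := lamG t t0.
  have GLt := GLc t t0.
  rewrite -rhoE // mulmxA -rhoM // -comm // rhoM // mulmxA //.
split; first exact: Gp0.
move=> i j; rewrite mxE horner_coef0.
have QO : Q \is a mxOver (polyOver k) by apply/mxOverP.
have CO : map_mx polyC p \is a mxOver (polyOver k).
  by apply/mxOverP => a b; rewrite mxE polyOverC.
have LQ : Lc *m Q = Q *m map_mx polyC p.
  apply: ev_inj => t t0; rewrite !evM evC.
  have := comm t t0; rewrite lamQ // -scalemxAr -scalemxAl => /scalerI H.
  by apply: H; rewrite invr_neq0 // expf_neq0.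
have DL : \det Q *: Lc = Q *m map_mx polyC p *m \adj Q.
  by rewrite -LQ -mulmxA mul_mx_adj mul_mx_scalar.
have := congr1 (fun A : 'M[{poly K}]_n => A i j) DL; rewrite mxE => DLij.
apply: (low_coef hk _ _ _ DLij).
- exact: det_over.
- by move/mxOverP: (mxOverM (mxOverM QO CO) (adj_over QO)); apply.
apply/eqP => D0.
have := Gunit (lamG 1 (oner_neq0 _)); rewrite lamQ ?oner_neq0 // expr1n invr1 scale1r.
have -> : \matrix_(i, j) (Q i j).[1] = ev Q 1 by [].
by rewrite unitmxE unitfE evE det_map_mx D0 rmorph0 eqxx.
Qed.

Lemma main_sec (gamma : 'cV[K]_m) (lam : K -> 'M[K]_n)
  (hlam : Lambda_min k G rho gamma lam)
  (p : 'M[K]_n) (hp : Pgroup G lam p) (hpk : mx_over k p) :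
  Lambda_min k G rho (rho p *m gamma) lam /\
  forall x1 x2 : 'cV[K]_m,
    vlim (fun t => rho (lam t) *m gamma) x1 ->
    vlim (fun t => rho (lam t) *m (rho p *m gamma)) x2 ->
    exists g : 'M[K]_n, [/\ G g, mx_over k g & x2 = rho g *m x1].
Proof.
case: hlam => [[clam [x1 Hx1 ss1]] hmin].
have [p0 [Gp0 p0k] Hlim] := key clam hp hpk.
have Gp : G p by case: hp.
split.
- split.
  + split => //; exists (rho p0 *m x1); [exact: Hlim | exact: ss_transfer].
  + move=> mu d d' cmu fl fm.
    apply: (hmin (fun t => invmx p *m mu t *m p) d d') => //.
    * exact: cand_conj.
    * by apply: fix_conj => //; case: cmu => -[muG _ _] _.
- move=> y1 y2 Hy1 Hy2; exists p0; split => //.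
  exact: vlim_uniq Hy2 (Hlim _ _ Hy1).
Qed.

End Main.

Unset Implicit Arguments. Set Strict Implicit.

Theorem lemma3p6 (K : closedFieldType) (k : {pred K})
  (hk : is_subfield k) (halg : algebraic_over k) (hperf : perfect k)
  (n m : nat) (G : 'M[K]_n -> Prop)
  (hG : alg_group_over k G) (hred : reductive G)
  (rho : 'M[K]_n -> 'M[K]_m) (hrho : rational_rep_over k G rho)
  (gamma : 'cV[K]_m) (hgamma : mx_over k gamma)
  (lam : K -> 'M[K]_n) (hlam : Lambda_min k G rho gamma lam)
  (p : 'M[K]_n) (hp : Pgroup G lam p) (hpk : mx_over k p) :
  Lambda_min k G rho (rho p *m gamma) lam /\
  forall x1 x2 : 'cV[K]_m,
    vlim (fun t => rho (lam t) *m gamma) x1 ->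
    vlim (fun t => rho (lam t) *m (rho p *m gamma)) x2 ->
    exists g : 'M[K]_n, [/\ G g, mx_over k g & x2 = rho g *m x1].
Proof. exact: (main_sec hk hG hrho hlam hp hpk). Qed.
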